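(* Let $d,n\in\mathbb{N}$, let $\mathcal{S}^*\subseteq\{1,\dots,d\}$, let $a_{1:n}\in(\{0,1\}^d)^n$ be arbitrary, and let $x_t:=h_{\mathcal{S}^*}(a_t)$ for $t=1,\dots,n$. Then the cumulative log-loss of the predictor $\pi_d$ satisfies $\mathcal{L}_n(\pi_d)=-\log_2\prod_{t=1}^n\pi_d(x_t\mid x_{<t};a_{1:t})\le (d+1)\log_2(n+1)$.
   Context: For $\mathcal{S}\subseteq\{1,\dots,d\}$ and $a\in\{0,1\}^d$, $h_{\mathcal{S}}(a)=\bigwedge_{i\in\mathcal{S}}a^i$ (equal to $1$ if $\mathcal{S}=\emptyset$), where $a^i$ is the $i$-th component of $a$. The predictor $\pi_d$ is defined as follows. At time $t$, let $\mathcal{D}_t:=\{i\in\{1,\dots,d\}: a_\tau^i=1\text{ for every }\tau<t\text{ with }x_\tau=1\}$ and $y_t:=\bigwedge_{i\in\mathcal{D}_t}a_t^i$ (equal to $1$ if $\mathcal{D}_t=\emptyset$). Then $\pi_d(x\mid x_{<t};a_{1:t}):=\frac{t}{t+1}$ if $x=y_t$ and $:=\frac{1}{t+1}$ if $x\ne y_t$, for $x\in\{0,1\}$. *)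

(* Defs.v *)
From Stdlib Require Import Reals List Bool.
Import ListNotations.
Open Scope R_scope.

(* Inputs a_t in {0,1}^d are encoded as a : nat -> nat -> bool with
   a t i = i-th component of a_t (t, i are 1-based; only 1<=i<=d matter).
   Subsets S of {1..d} are membership predicates S : nat -> bool. *)

Definition h (d : nat) (S : nat -> bool) (a : nat -> bool) : bool :=
  forallb (fun i => implb (S i) (a i)) (seq 1 d).

Definition inD (x : nat -> bool) (a : nat -> nat -> bool) (t i : nat) : bool :=
  forallb (fun tau => implb (x tau) (a tau i)) (seq 1 (t - 1)).

Definition y_t (d : nat) (x : nat -> bool) (a : nat -> nat -> bool) (t : nat) : bool :=
  forallb (fun i => implb (inD x a t i) (a t i)) (seq 1 d).

Definition pi_d (d : nat) (x : nat -> bool) (a : nat -> nat -> bool) (t : nat) (b : bool) : R :=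
  if Bool.eqb b (y_t d x a t) then INR t / INR (t + 1) else 1 / INR (t + 1).

Definition log2 (r : R) : R := ln r / ln 2.

Definition cum_logloss (d n : nat) (x : nat -> bool) (a : nat -> nat -> bool) : R :=
  - log2 (fold_right Rmult 1 (map (fun t => pi_d d x a t (x t)) (seq 1 n))).

(* Main.v *)
Require Import Defs.
From Stdlib Require Import Reals List Bool.
From Stdlib Require Import Lia Lra.
Import ListNotations.
Open Scope R_scope.

Lemma fold_mult_c (l : list R) (c : R) :
  fold_right Rmult c l = fold_right Rmult 1 l * c.
Proof. induction l; simpl; [ring | rewrite IHl; ring]. Qed.

Lemma prod_S (f : nat -> R) (n : nat) :
  fold_right Rmult 1 (map f (seq 1 (S n))) = fold_right Rmult 1 (map f (seq 1 n)) * f (S n).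
Proof.
  rewrite seq_S, map_app, fold_right_app. simpl. rewrite fold_mult_c. ring.
Qed.

Lemma inD_S x a t i : (1 <= t)%nat ->
  inD x a (S t) i = inD x a t i && implb (x t) (a t i).
Proof.
  intros Ht. unfold inD. replace (S t - 1)%nat with (S (t - 1)) by lia.
  rewrite seq_S, forallb_app. simpl. replace (S (t - 1)) with t by lia.
  now rewrite andb_true_r.
Qed.

Definition cnt d x a t := length (filter (inD x a t) (seq 1 d)).

Lemma filter_le (f g : nat -> bool) l :
  (forall i, In i l -> f i = true -> g i = true) ->
  (length (filter f l) <= length (filter g l))%nat.
Proof.
  induction l as [|b l IH]; simpl; intros H; [lia|].
  assert (IH' := IH (fun i Hi => H i (or_intror Hi))).
  destruct (f b) eqn:E1; destruct (g b) eqn:E2; simpl; try lia.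
  rewrite (H b (or_introl eq_refl) E1) in E2; discriminate.
Qed.

Lemma filter_lt (f g : nat -> bool) l :
  (forall i, In i l -> f i = true -> g i = true) ->
  (exists i, In i l /\ f i = false /\ g i = true) ->
  (length (filter f l) < length (filter g l))%nat.
Proof.
  induction l as [|b l IH]; simpl; intros H [j [Hj [Hf Hg]]]; [contradiction|].
  assert (L := filter_le f g l (fun i Hi => H i (or_intror Hi))).
  destruct Hj as [<-|Hj].
  - rewrite Hf, Hg. simpl. lia.
  - assert (IH' := IH (fun i Hi => H i (or_intror Hi)) (ex_intro _ j (conj Hj (conj Hf Hg)))).
    destruct (f b) eqn:E1; destruct (g b) eqn:E2; simpl; try lia.
    rewrite (H b (or_introl eq_refl) E1) in E2; discriminate.
Qed.

Lemma cnt_le d x a t : (cnt d x a t <= d)%nat.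
Proof.
  unfold cnt. rewrite <- (length_seq d 1) at 2. apply filter_length_le.
Qed.

Lemma cnt_mono d x a t : (1 <= t)%nat -> (cnt d x a (S t) <= cnt d x a t)%nat.
Proof.
  intros Ht. apply filter_le. intros i _. rewrite inD_S by lia.
  now intros [? _]%andb_prop.
Qed.

Section Main.
Variables (d : nat) (Sstar : nat -> bool)
  (HS : forall i, Sstar i = true -> (1 <= i <= d)%nat) (a : nat -> nat -> bool).
Let x := fun t => h d Sstar (a t).

Lemma S_in_D t i : Sstar i = true -> inD x a t i = true.
Proof.
  intros Hi. unfold inD. apply forallb_forall. intros tau _.
  destruct (x tau) eqn:E; simpl; auto.
  unfold x, h in E. rewrite forallb_forall in E.
  assert (Hin : In i (seq 1 d)) by (apply in_seq; specialize (HS i Hi); lia).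
  specialize (E i Hin). rewrite Hi in E. exact E.
Qed.

Lemma y_correct t : y_t d x a t = true -> x t = true.
Proof.
  unfold y_t. rewrite forallb_forall. intros H.
  unfold x, h. apply forallb_forall. intros i Hin.
  destruct (Sstar i) eqn:E; simpl; auto.
  specialize (H i Hin). rewrite (S_in_D t i E) in H. exact H.
Qed.

Lemma mistake t : (1 <= t)%nat -> y_t d x a t = false -> x t = true ->
  (S (cnt d x a (S t)) <= cnt d x a t)%nat.
Proof.
  intros Ht Hy Hx. unfold cnt. apply filter_lt.
  - intros i _. rewrite inD_S by lia. now intros [? _]%andb_prop.
  - unfold y_t in Hy. destruct (forallb _ _) eqn:E in Hy; [discriminate|].
    apply Bool.not_true_iff_false in E. rewrite forallb_forall in E.
    apply Classical_Pred_Type.not_all_ex_not in E. destruct E as [i Hi].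
    apply Classical_Prop.imply_to_and in Hi. destruct Hi as [Hin Hi].
    exists i. split; [exact Hin|].
    destruct (inD x a t i) eqn:E1, (a t i) eqn:E2; simpl in Hi; try tauto.
    rewrite inD_S by lia. rewrite E1, E2, Hx. simpl. auto.
Qed.

Lemma pow_anti (q : R) m k : 0 <= q <= 1 -> (m <= k)%nat -> q ^ k <= q ^ m.
Proof.
  intros [H0 H1] Hmk. replace k with (m + (k - m))%nat by lia.
  rewrite pow_add. rewrite <- (Rmult_1_r (q ^ m)) at 2.
  apply Rmult_le_compat_l; [apply pow_le; auto|].
  rewrite <- (pow1 (k - m)). apply pow_incr. lra.
Qed.

Definition P n := fold_right Rmult 1 (map (fun t => pi_d d x a t (x t)) (seq 1 n)).

Lemma key N : forall n, (n <= N)%nat ->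
  (/ INR (N + 1)) ^ (d - cnt d x a (S n)) <= P n * INR (n + 1).
Proof.
  set (q := / INR (N + 1)).
  assert (HNp : 0 < INR (N + 1)) by (apply lt_0_INR; lia).
  assert (Hq : 0 <= q <= 1).
  { unfold q. split. left. apply Rinv_0_lt_compat. auto.
    rewrite <- Rinv_1. apply Rinv_le_contravar; [lra|].
    replace 1 with (INR 1) by reflexivity. apply le_INR. lia. }
  induction n as [|n IH]; intros Hn.
  - unfold P. simpl. rewrite Rmult_1_l. rewrite <- (pow1 (d - cnt d x a 1)).
    apply pow_incr. lra.
  - unfold P. rewrite prod_S. fold (P n).
    specialize (IH ltac:(lia)).
    assert (Hn1 : 0 < INR (n + 1)) by (apply lt_0_INR; lia).
    assert (E2 : INR (S n + 1) = INR (S n) + 1) by (rewrite plus_INR; reflexivity).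
    assert (E1 : INR (n + 1) = INR (S n)) by (f_equal; lia).
    unfold pi_d.
    destruct (Bool.eqb (x (S n)) (y_t d x a (S n))) eqn:Eq.
    + replace (P n * (INR (S n) / INR (S n + 1)) * INR (S n + 1)) with (P n * INR (n + 1)).
      2:{ rewrite E1. field. rewrite E2. assert (0 <= INR (S n)) by apply pos_INR. lra. }
      eapply Rle_trans; [|exact IH]. apply pow_anti; auto.
      assert (H := cnt_mono d x a (S n) ltac:(lia)). lia.
    + assert (Hy : y_t d x a (S n) = false /\ x (S n) = true).
      { destruct (y_t d x a (S n)) eqn:Ey.
        - rewrite (y_correct _ Ey) in Eq. discriminate.
        - destruct (x (S n)); [auto | discriminate]. }
      destruct Hy as [Hy Hx].
      assert (Hm := mistake (S n) ltac:(lia) Hy Hx).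
      assert (Hc := cnt_le d x a (S n)).
      replace (P n * (1 / INR (S n + 1)) * INR (S n + 1)) with (P n * INR (n + 1) * / INR (n + 1)).
      2:{ field. split; lra. }
      apply Rle_trans with (q ^ (S (d - cnt d x a (S n)))).
      * apply pow_anti; auto. lia.
      * simpl. rewrite Rmult_comm. apply Rmult_le_compat.
        -- apply pow_le; lra.
        -- unfold q; left; apply Rinv_0_lt_compat; auto.
        -- exact IH.
        -- apply Rinv_le_contravar; auto. apply le_INR. lia.
Qed.

End Main.

Theorem theorem5 (d n : nat) (Sstar : nat -> bool)
  (HS : forall i, Sstar i = true -> (1 <= i <= d)%nat)
  (a : nat -> nat -> bool) :
  cum_logloss d n (fun t => h d Sstar (a t)) a <= INR (d + 1) * log2 (INR (n + 1)).
Proof.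
  assert (K := key d Sstar HS a n n (Nat.le_refl n)).
  set (x := fun t => h d Sstar (a t)) in *.
  assert (HNp : 0 < INR (n + 1)) by (apply lt_0_INR; lia).
  set (q := / INR (n + 1)) in *.
  assert (Hq0 : 0 < q) by (apply Rinv_0_lt_compat; auto).
  assert (Hq1 : q <= 1).
  { unfold q. rewrite <- Rinv_1. apply Rinv_le_contravar; [lra|].
    replace 1 with (INR 1) by reflexivity. apply le_INR. lia. }
  assert (K2 : q ^ d <= P d Sstar a n * INR (n + 1)).
  { eapply Rle_trans; [|exact K]. apply pow_anti; [lra|]. lia. }
  assert (K3 : q ^ (d + 1) <= P d Sstar a n).
  { rewrite pow_add. simpl. rewrite Rmult_1_r.
    replace (P d Sstar a n) with (P d Sstar a n * INR (n + 1) * q)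
      by (unfold q; field; lra).
    apply Rmult_le_compat_r; lra. }
  assert (Hpos : 0 < q ^ (d + 1)) by (apply pow_lt; auto).
  assert (L : ln (q ^ (d + 1)) <= ln (P d Sstar a n)).
  { destruct K3 as [K3|K3]; [left; apply ln_increasing; auto | right; now rewrite K3]. }
  rewrite ln_pow in L by auto. unfold q in L. rewrite ln_Rinv in L by auto.
  unfold cum_logloss, log2. fold x. change (fold_right Rmult 1 _) with (P d Sstar a n).
  assert (H2 : 0 < ln 2) by (apply Rlt_trans with (/2); [lra | apply ln_lt_2]).
  unfold Rdiv. rewrite Ropp_mult_distr_l, <- Rmult_assoc.
  apply Rmult_le_compat_r; [left; apply Rinv_0_lt_compat; auto | lra].
Qed.
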